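(* Let $k$ be a positive integer and $F$ a 2-factor on $n$ vertices. Then there exists a partition of $V(F)$ into parts $U_0,U_1,\dots,U_{\lfloor n/k\rfloor}$ such that $|U_i|=k$ for all $1\le i\le\lfloor n/k\rfloor$ (hence $|U_0|<k$), and such that for every $0\le i\le\lfloor n/k\rfloor$, the subgraph of $F$ induced by $U_i$ is a disjoint union of cycles and at most $2$ paths. In particular, for every $1\le i\le\lfloor n/k\rfloor$, $F[U_i]$ contains at least $k-2$ edges.
   Context: A 2-factor on $n$ vertices is a 2-regular graph on $n$ vertices. *)

(* Defs.v *)
From mathcomp Require Import all_boot.
Set Implicit Arguments. Unset Strict Implicit. Unset Printing Implicit Defensive.

Definition simple_graph (T : finType) (e : rel T) : Prop :=
  symmetric e /\ irreflexive e.

Definition two_factor (T : finType) (e : rel T) : Prop :=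
  simple_graph e /\ forall x : T, #|[set y | e x y]| = 2.

(* The subgraph induced by C is a path: there is a nonempty duplicate-free
   enumeration s of C such that two vertices of C are adjacent iff they are
   consecutive in s.  (A single vertex is a path of length 0.) *)
Definition induces_path (T : finType) (e : rel T) (C : {set T}) : Prop :=
  exists s : seq T, [/\ s != [::], uniq s, C =i s &
    forall x y, x \in C -> y \in C ->
      e x y = ((x, y) \in zip s (behead s)) || ((y, x) \in zip s (behead s))].

Definition induces_cycle (T : finType) (e : rel T) (C : {set T}) : Prop :=
  exists s : seq T, [/\ 3 <= size s, uniq s, C =i s &
    forall x y, x \in C -> y \in C ->
      e x y = (y == next s x) || (x == next s y)].

(* F[U] is a disjoint union of cycles and at most two paths: U is partitioned
   into blocks Pc (inducing cycles) and Pp (inducing paths), with no edges of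
   F between distinct blocks, and at most 2 path blocks. *)
Definition cycles_and_at_most_2_paths (T : finType) (e : rel T) (U : {set T})
  : Prop :=
  exists Pc Pp : {set {set T}},
    [/\ partition (Pc :|: Pp) U /\ [disjoint Pc & Pp],
        (forall C, C \in Pc -> induces_cycle e C),
        (forall C, C \in Pp -> induces_path e C),
        (forall C D, C \in Pc :|: Pp -> D \in Pc :|: Pp -> C != D ->
           forall x y, x \in C -> y \in D -> ~~ e x y)
      & #|Pp| <= 2].

Definition n_edges_in (T : finType) (e : rel T) (U : {set T}) : nat :=
  #|[set [set x; y] | x in U, y in U & e x y]|.

(* Main.v *)
Require Import Defs.
From mathcomp Require Import all_boot.
From mathcomp Require Import zify.
Set Implicit Arguments. Unset Strict Implicit. Unset Printing Implicit Defensive.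


Section Seg.
Variable T : eqType.
Implicit Types s : seq T.

Lemma mem_drop_uniq s u x : uniq s ->
  (x \in drop u s) = (x \in s) && (u <= index x s).
Proof.
move=> us; have [xs|xs] := boolP (x \in s); last first.
  by apply/negbTE; apply: contra xs; apply: mem_drop.
have E : s = take u s ++ drop u s by rewrite cat_take_drop.
have : uniq (take u s ++ drop u s) by rewrite -E.
rewrite cat_uniq => /and3P[_ dis _].
have : x \in take u s ++ drop u s by rewrite -E.
rewrite mem_cat; case/orP=> xin.
  have xnd : x \notin drop u s by apply: contra dis => xd; apply/hasP; exists x.
  rewrite (negbTE xnd); move: xin; rewrite in_take //; lia.
rewrite xin /=; apply/esym; rewrite leqNgt -in_take //.
by apply: contra dis => xt; apply/hasP; exists x.
Qed.

Lemma index_drop_uniq s u x : uniq s -> x \in drop u s ->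
  index x (drop u s) = index x s - u.
Proof.
move=> us xd; have := xd; rewrite mem_drop_uniq // => /andP[xs le].
have E : s = take u s ++ drop u s by rewrite cat_take_drop.
have : uniq (take u s ++ drop u s) by rewrite -E.
rewrite cat_uniq => /and3P[_ dis _].
have xnt : x \notin take u s by apply: contra dis => xt; apply/hasP; exists x.
have lt : u < size s by have := index_mem x s; rewrite xs; lia.
rewrite [in index x s]E index_cat (negbTE xnt) size_take lt; lia.
Qed.

Lemma seg_mem s u m x : uniq s ->
  (x \in take m (drop u s)) = (x \in s) && (u <= index x s < u + m).
Proof.
move=> us; have [xd|xd] := boolP (x \in drop u s).
  rewrite in_take // index_drop_uniq //; move: xd; rewrite mem_drop_uniq // => /andP[-> le] /=.
  lia.
have -> : (x \in take m (drop u s)) = false.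
  by apply/negbTE; apply: contra xd; apply: mem_take.
move: xd; rewrite mem_drop_uniq //; case: (x \in s) => //=; lia.
Qed.

Lemma index_take_in s m x : x \in take m s -> index x (take m s) = index x s.
Proof.
move=> xt; rewrite -{2}(cat_take_drop m s) index_cat xt //.
Qed.

Lemma index_seg s u m x : uniq s -> x \in take m (drop u s) ->
  index x (take m (drop u s)) = index x s - u.
Proof.
move=> us xt; rewrite index_take_in // index_drop_uniq //; exact: mem_take xt.
Qed.

Lemma zip_cons_uniq (a : T) (r : seq T) (x y : T) :  uniq (a :: r) ->
  ((x, y) \in zip (a :: r) r) =
  [&& x \in a :: r, y \in a :: r & index y (a :: r) == (index x (a :: r)).+1].
Proof.
elim: r a => [|b r IH] a.
  rewrite /= !inE => _; case: (eqVneq x a) => [->|xa]; case: (eqVneq y a) => [->|ya] //=.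
move=> u; have := u; rewrite cons_uniq => /andP[anr ubr].
rewrite [zip _ _]/= [_ \in (a,b) :: _]in_cons IH //.
have ab : a != b by move: anr; apply: contra => /eqP ->; rewrite inE eqxx.
rewrite xpair_eqE [x \in a :: _]in_cons [y \in a :: _]in_cons.
case: (eqVneq x a) => [->|xa] /=.
  rewrite eqxx (negbTE anr) /=.
  case: (eqVneq y a) => [->|ya] /=; first by rewrite (negbTE ab).
  case: (eqVneq y b) => [->|byy] /=; first by rewrite inE !eqxx.
  by rewrite andbF.
rewrite (eq_sym a x) (negbTE xa) /=.
case: (eqVneq y a) => [->|ya] /=; first by rewrite (negbTE anr) /= ?andbF.
by [].
Qed.

Lemma zip_uniq (p : seq T) (x y : T) : uniq p ->
  ((x, y) \in zip p (behead p)) =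
  [&& x \in p, y \in p & index y p == (index x p).+1].
Proof. by case: p => [|a r] //; apply: zip_cons_uniq. Qed.

Lemma next_index s x : uniq s -> x \in s ->
  index (next s x) s = (index x s).+1 %% size s.
Proof.
move=> us xs; rewrite next_nth xs.
case: s us xs => [|a r] // us xs.
have lt : index x (a :: r) < (size r).+1 by rewrite -[(size r).+1]/(size (a::r)) index_mem.
have [lt2|ge2] := ltnP (index x (a :: r)) (size r).
  have -> : nth a r (index x (a :: r)) = nth a (a :: r) (index x (a :: r)).+1 by [].
  rewrite index_uniq //= ?modn_small //.
have eqi : index x (a :: r) = size r by lia.
rewrite eqi nth_default // /= eqxx modnn //.
Qed.
End Seg.


Ltac nlia := intros; repeat match goal with
  | H : context [size ?s] |- _ => let m := fresh "m" in set m := size s in *; clearbody m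
  | |- context [size ?s] => let m := fresh "m" in set m := size s in *; clearbody m
  | H : context [index ?x ?s] |- _ => let m := fresh "i" in set m := index x s in *; clearbody m
  | |- context [index ?x ?s] => let m := fresh "i" in set m := index x s in *; clearbody m
  end; lia.

Lemma modS_cases i m : i < m -> i.+1 %% m = if i.+1 < m then i.+1 else 0.
Proof.
move=> lt; case: ltnP => h; first by rewrite modn_small.
have -> : i.+1 = m by lia.
by rewrite modnn.
Qed.

Section Cyc.
Variable T : finType.
Variable e : rel T.
Hypothesis esym : symmetric e.
Hypothesis eirr : irreflexive e.
Hypothesis deg : forall x : T, #|[set y | e x y]| = 2.

Lemma next_indexF (c : seq T) x : uniq c -> x \in c ->
  index (next c x) c = (index x c).+1 %% size c.
Proof. exact: next_index. Qed.
Lemma mem_drop_uniqF (s : seq T) u x : uniq s ->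
  (x \in drop u s) = (x \in s) && (u <= index x s).
Proof. exact: mem_drop_uniq. Qed.
Lemma index_drop_uniqF (s : seq T) u x : uniq s -> x \in drop u s ->
  index x (drop u s) = index x s - u.
Proof. exact: index_drop_uniq. Qed.
Lemma seg_memF (s : seq T) u m x : uniq s ->
  (x \in take m (drop u s)) = (x \in s) && (u <= index x s < u + m).
Proof. exact: seg_mem. Qed.
Lemma index_segF (s : seq T) u m x : uniq s -> x \in take m (drop u s) ->
  index x (take m (drop u s)) = index x s - u.
Proof. exact: index_seg. Qed.
Lemma zip_uniqF (p : seq T) (x y : T) : uniq p ->
  ((x, y) \in zip p (behead p)) =
  [&& x \in p, y \in p & index y p == (index x p).+1].
Proof. exact: zip_uniq. Qed.
Lemma index_memF (s : seq T) x : (index x s < size s) = (x \in s).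
Proof. exact: index_mem. Qed.

Lemma next_neq_prev (c : seq T) x : uniq c -> 3 <= size c -> x \in c ->
  next c x != prev c x.
Proof.
move=> uc sc xc; apply/negP=> /eqP E.
have nn : next c (next c x) = x by rewrite {1}E next_prev.
have xn : next c x \in c by rewrite mem_next.
have := next_indexF uc xn; rewrite nn (next_indexF uc xc).
have lt : index x c < size c by rewrite index_mem.
rewrite (modS_cases lt); case: ltnP => h1.
  rewrite (modS_cases h1); case: ltnP => h2.
  all: try lia.
rewrite modn_small; lia.
Qed.

Lemma cyc_nbr (c : seq T) x : cycle e c -> uniq c -> 3 <= size c -> x \in c ->
  forall y, e x y = (y == next c x) || (y == prev c x).
Proof.
move=> cc uc sc xc y.
have sub : [set next c x; prev c x] \subset [set y | e x y].
  apply/subsetP=> z; rewrite !inE => /orP[] /eqP ->.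
    exact: next_cycle.
  by rewrite esym; apply: prev_cycle.
have : [set next c x; prev c x] == [set y | e x y].
  by rewrite eqEcard sub deg cards2 next_neq_prev.
move/eqP=> E; have : (y \in [set y | e x y]) = (y \in [set next c x; prev c x]) by rewrite E.
by rewrite !inE.
Qed.

Definition cyccor (c : seq T) := forall x y, x \in c -> y \in c ->
  e x y = (y == next c x) || (x == next c y).

Lemma cyc_cor (c : seq T) : cycle e c -> uniq c -> 3 <= size c -> cyccor c.
Proof.
move=> cc uc sc x y xc yc; rewrite (cyc_nbr cc uc sc xc); congr (_ || _).
apply/eqP/eqP=> [->|->]; first by rewrite next_prev.
by rewrite prev_next.
Qed.

Lemma cyc_closed (c : seq T) x y : cycle e c -> uniq c -> 3 <= size c -> x \in c ->
  e x y -> y \in c.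
Proof.
move=> cc uc sc xc; rewrite (cyc_nbr cc uc sc xc) => /orP[] /eqP ->.
  by rewrite mem_next. by rewrite mem_prev.
Qed.

Lemma max_path (x0 : T) : exists p : seq T,
  [/\ uniq (x0 :: p), path e x0 p & forall y, e (last x0 p) y -> y \in x0 :: p].
Proof.
suff H : forall n (p : seq T), #|T| - size p < n -> uniq (x0 :: p) -> path e x0 p ->
  exists p' : seq T,
  [/\ uniq (x0 :: p'), path e x0 p' & forall y, e (last x0 p') y -> y \in x0 :: p'].
  by apply: (H #|T|.+1 [::]) => //; lia.
elim=> [|n IH] p //.
move=> hn up pp.
case: (pickP (fun y => e (last x0 p) y && (y \notin x0 :: p))) => [y /andP[ey yn] | none].
  have szp : size (x0 :: p) <= #|T| by rewrite -(card_uniqP up) max_card.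
  apply: (IH (rcons p y)).
  - rewrite size_rcons; move: szp => /= szp. set N := #|T| in hn szp *. lia.
  - by rewrite -rcons_cons rcons_uniq yn up.
  - by rewrite rcons_path pp ey.
exists p; split=> // y ey; have := none y; rewrite ey /=.
by move/negbFE.
Qed.

Lemma path_in (S : {set T}) (x0 : T) (p : seq T) :
  (forall x y, x \in S -> e x y -> y \in S) -> x0 \in S -> path e x0 p ->
  forall z, z \in x0 :: p -> z \in S.
Proof.
move=> cl; elim: p x0 => [|a p IH] x0 x0S /=.
  by move=> _ z; rewrite inE => /eqP ->.
move=> /andP[ea pa] z; rewrite inE => /orP[/eqP -> //|].
by apply: IH => //; apply: cl ea.
Qed.

Lemma find_cycle (S : {set T}) (x0 : T) :
  (forall x y, x \in S -> e x y -> y \in S) -> x0 \in S ->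
  exists c : seq T, [/\ cycle e c, uniq c, 3 <= size c & {subset c <= S}].
Proof.
move=> cl x0S.
have [p [up pp hl]] := max_path x0.
have inS := path_in cl x0S pp.
case/lastP: p up pp hl inS => [|p' z] up pp hl inS.
  have : 0 < #|[set y | e x0 y]| by rewrite deg.
  case/card_gt0P=> y; rewrite inE => ey.
  by have := hl y ey; rewrite inE => /eqP yx; move: ey; rewrite yx eirr.
rewrite last_rcons in hl.
set r := x0 :: p'.
have pz : e (last x0 p') z by move: pp; rewrite rcons_path => /andP[].
have pp' : path e x0 p' by move: pp; rewrite rcons_path => /andP[].
have ur : uniq (rcons r z) by [].
move: (ur); rewrite rcons_uniq => /andP[znr urr].
have : 0 < #|[set y | e z y] :\ last x0 p'|.
  rewrite cardsD deg; have : #|[set y | e z y] :&: [set last x0 p']| <= 1.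
    by rewrite -(cards1 (last x0 p')) subset_leq_card // subsetIr.
  lia.
case/card_gt0P=> w; rewrite !inE => /andP[wpz ezw].
have wr : w \in r.
  have := hl w ezw; rewrite -rcons_cons mem_rcons inE => /orP[/eqP wz|//].
  by move: ezw; rewrite wz eirr.
set i := index w r.
have dr : drop i r = w :: drop i.+1 r by rewrite drop_index.
set t := drop i.+1 r.
have lr : last x0 p' = last w t.
  have -> : last x0 p' = last x0 r by [].
  by rewrite -(cat_take_drop i r) last_cat dr.
have tn : t != [::] by apply: contra wpz => /eqP tn; rewrite lr tn.
have uwt : uniq (w :: t) by rewrite -dr drop_uniq.
have znt : z \notin w :: t by rewrite -dr; apply: contra znr; apply: mem_drop.
exists (w :: rcons t z); split.
- rewrite /cycle rcons_path last_rcons ezw andbT rcons_path -lr pz andbT.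
  have : sorted e (drop i r) by apply: drop_sorted.
  by rewrite dr.
- move: uwt znt; rewrite /= !inE mem_rcons inE !negb_or rcons_uniq => /andP[wt ut] /andP[zw zt].
  by rewrite eq_sym zw wt zt ut.
- by rewrite /= size_rcons; move: tn; case: (t) => //.
- move=> y yc; apply: inS; rewrite -rcons_cons mem_rcons inE.
  move: yc; rewrite inE mem_rcons inE => /orP[/eqP ->|/orP[->//|yt]].
    by rewrite wr orbT.
  by rewrite (mem_drop (n0 := i.+1) yt) orbT.
Qed.
End Cyc.


Section Decomp.
Variable T : finType.
Variable e : rel T.
Hypothesis esym : symmetric e.
Hypothesis eirr : irreflexive e.
Hypothesis deg : forall x : T, #|[set y | e x y]| = 2.

Definition goodA (S : {set T}) (s : seq T) (lo hi : T -> nat) :=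
 [/\ uniq s /\ S =i s,
  (forall x, x \in S -> [/\ lo x <= index x s < hi x, hi x <= size s, 3 <= hi x - lo x
       & cyccor e (take (hi x - lo x) (drop (lo x) s))]),
  (forall x y, x \in S -> y \in S -> (lo x <= index y s < hi x) = (lo y == lo x)),
  (forall x y, x \in S -> y \in S -> lo y = lo x -> hi y = hi x) &
  (forall x y, x \in S -> e x y -> lo x <= index y s < hi x)].

Lemma decomp (S : {set T}) : (forall x y, x \in S -> e x y -> y \in S) ->
  exists s lo hi, goodA S s lo hi.
Proof.
have [N] := ubnP #|S|; elim: N S => // N IH S hS cl.
case: (set_0Vmem S) => [->|[x0 x0S]].
  exists [::], (fun _ => 0), (fun _ => 0); split=> //; try by move=> x; rewrite inE.
  by split=> // x; rewrite inE.
have [c [cc uc sc cS]] := find_cycle eirr deg cl x0S.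
set S' := S :\: [set x in c].
have cl' : forall x y, x \in S' -> e x y -> y \in S'.
  move=> x y; rewrite !inE => /andP[xnc xS] exy; rewrite (cl x y xS exy) andbT.
  apply: contra xnc => yc; apply: (cyc_closed esym deg cc uc sc yc); by rewrite esym.
have ltS : #|S'| < N.
  have : 0 < #|S :&: [set x in c]|.
    have c0 : 0 < size c by apply: (@leq_trans 3).
    apply/card_gt0P; exists (nth x0 c 0); rewrite !inE mem_nth //.
    by rewrite cS // mem_nth.
  have ab : #|S :&: [set x in c]| <= #|S| by rewrite subset_leq_card // subsetIl.
  rewrite /S' cardsD => pos; lia.
have [s' [lo' [hi' [[us' Es'] G3 G4 G5 G6]]]] := IH S' ltS cl'.
exists (c ++ s'), (fun x => if x \in c then 0 else size c + lo' x),
  (fun x => if x \in c then size c else size c + hi' x).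
have nS' : forall x, x \in c -> x \notin s'.
  by move=> x xc; rewrite -Es' !inE xc.
have inS' : forall x, x \in S -> x \notin c -> x \in S'.
  by move=> x xS xc; rewrite !inE xS xc.
have idx : forall x, index x (c ++ s') = if x \in c then index x c else size c + index x s'.
  by move=> x; rewrite index_cat.
have ic : forall x, x \in c -> index x c < size c by move=> x xc; rewrite index_memF.
split; first split.
- rewrite cat_uniq uc us' andbT /=; apply/hasPn => y ys'; apply: contraL ys' => yc.
  exact: nS'.
- move=> x; rewrite mem_cat -Es' !inE; case: (boolP (x \in c)) => xc //=.
  by rewrite cS.
- move=> x xS; case: (boolP (x \in c)) => xc.
    rewrite idx xc subn0 drop0 take_size_cat // size_cat ic //.
    split=> //; [exact: leq_addr | exact: cyc_cor].
  have [h1 h2 h3 h4] := G3 x (inS' x xS xc).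
  rewrite idx (negbTE xc) size_cat subnDl drop_cat ifN; last by rewrite -leqNgt leq_addr.
  rewrite addKn.
  split=> //; lia.
- move=> x y xS yS; rewrite idx.
  case: (boolP (x \in c)) => xc; case: (boolP (y \in c)) => yc.
  + by rewrite ic // eqxx.
  + have := ic x xc; lia.
  + have := ic y yc; lia.
  + rewrite leq_add2l ltn_add2l eqn_add2l; exact: G4 (inS' x xS xc) (inS' y yS yc).
- move=> x y xS yS.
  case: (boolP (x \in c)) => xc; case: (boolP (y \in c)) => yc //; try lia.
  move/eqP; rewrite eqn_add2l => /eqP E; rewrite (G5 x y) //; exact: inS'.
- move=> x y xS exy; rewrite idx.
  case: (boolP (x \in c)) => xc.
    have yc : y \in c by apply: (cyc_closed esym deg cc uc sc xc exy).
    by rewrite yc ic.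
  have yc : y \notin c.
    by apply: contra xc => yc; apply: (cyc_closed esym deg cc uc sc yc); rewrite esym.
  rewrite (negbTE yc) leq_add2l ltn_add2l; exact: G6 (inS' x xS xc) exy.
Qed.
End Decomp.


Section Sub.
Variable T : finType.
Variable e : rel T.

Definition pathcor (p : seq T) := forall x y, x \in p -> y \in p ->
  e x y = ((x, y) \in zip p (behead p)) || ((y, x) \in zip p (behead p)).

Lemma cyc_sub (c : seq T) u v : uniq c -> 3 <= size c -> cyccor e c ->
  u < v -> v <= size c -> ~~ ((u == 0) && (v == size c)) ->
  pathcor (take (v - u) (drop u c)).
Proof.
move=> uc sc cc uv vs nuv x y xp yp.
have up : uniq (take (v - u) (drop u c)) by rewrite take_uniq // drop_uniq.
have := xp; rewrite seg_memF // => /andP[xc /andP[ux xv]].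
have := yp; rewrite seg_memF // => /andP[yc /andP[uy yv]].
rewrite !zip_uniqF // xp yp /= !index_segF //.
rewrite cc //.
have nx : next c x \in c by rewrite mem_next.
have ny : next c y \in c by rewrite mem_next.
have eqi : forall z w, z \in c -> w \in c -> (z == w) = (index z c == index w c).
  move=> z w zc wc; apply/eqP/eqP => [->//|h].
  by rewrite -(nth_index z zc) h nth_index.
rewrite (eqi y) // (eqi x _ xc ny) !next_indexF //.
have ix : index x c < size c by rewrite index_memF.
have iy : index y c < size c by rewrite index_memF.
rewrite (modS_cases ix) (modS_cases iy).
case: ltnP => h1; case: ltnP => h2; lia.
Qed.
End Sub.

Section Blocks.
Variable T : finType.
Variable e : rel T.
Hypothesis esymm : symmetric e.
Variables (s : seq T) (lo hi : T -> nat).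
Hypothesis us : uniq s.
Hypothesis alls : forall x, x \in s.
Definition seg x := take (hi x - lo x) (drop (lo x) s).
Hypothesis H3 : forall x, [/\ lo x <= index x s < hi x, hi x <= size s, 3 <= hi x - lo x
       & cyccor e (seg x)].
Hypothesis H4 : forall x y, (lo x <= index y s < hi x) = (lo y == lo x).
Hypothesis H5 : forall x y, lo y = lo x -> hi y = hi x.
Hypothesis H6 : forall x y, e x y -> lo x <= index y s < hi x.

Variables a b : nat.
Hypothesis bs : b <= size s.
Definition U := [set x | a <= index x s < b].
Definition K x := [set y | lo y == lo x].
Definition piece x := [set y in U | lo x == lo y].

Lemma in_seg x y : (y \in seg x) = (lo x <= index y s < hi x).
Proof. by rewrite /seg seg_memF // alls; have [h1 h2 h3 h4] := H3 x; lia. Qed.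

Lemma idx_seg x y : y \in seg x -> index y (seg x) = index y s - lo x.
Proof. by move=> h; rewrite /seg index_segF. Qed.

Lemma useg x : uniq (seg x).
Proof. by rewrite /seg take_uniq // drop_uniq. Qed.

Lemma size_seg x : size (seg x) = hi x - lo x.
Proof. by rewrite /seg size_takel // size_drop; have [h1 h2 h3 h4] := H3 x; lia. Qed.

Lemma card_U : #|U| = b - a.
Proof.
have -> : U = [set x in take (b - a) (drop a s)].
  by apply/setP=> x; rewrite !inE seg_memF // alls; lia.
have /card_uniqP : uniq (take (b - a) (drop a s)) by rewrite take_uniq // drop_uniq.
rewrite cardsE => ->.
rewrite size_take size_drop; case: ifP; lia.
Qed.

Lemma pieceE x y : (y \in piece x) = [&& a <= index y s, index y s < b & lo y == lo x].
Proof. by rewrite /piece /U !inE -andbA eq_sym. Qed.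

Lemma piece_eq x y : lo x = lo y -> piece x = piece y.
Proof. by move=> h; apply/setP=> z; rewrite !pieceE h. Qed.

Definition Pc := [set piece x | x in [set x in U | K x \subset U]].
Definition Pp := [set piece x | x in [set x in U | ~~ (K x \subset U)]].

Lemma PcPp : Pc :|: Pp = equivalence_partition (fun x y => lo x == lo y) U.
Proof.
rewrite /Pc /Pp -imsetU.
have -> : [set x in U | K x \subset U] :|: [set x in U | ~~ (K x \subset U)] = U.
  by apply/setP=> x; rewrite !inE; case: (K x \subset U); rewrite ?andbT ?andbF ?orbF.
by [].
Qed.

Lemma blockP : cycles_and_at_most_2_paths e U.
Proof.
exists Pc, Pp; split.
- split.
    rewrite PcPp; apply: equivalence_partitionP => x y z _ _ _ /=; split=> //.
    by move/eqP=> ->.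
  rewrite -setI_eq0; apply/eqP/setP=> C; rewrite !inE.
  apply/negP=> /andP[/imsetP[x xin ->] /imsetP[x' x'in E]].
  move: xin x'in; rewrite !inE => /andP[xU KU] /andP[x'U /negP []].
  have : x \in piece x' by rewrite -E pieceE eqxx andbT.
  rewrite pieceE => /and3P[_ _ /eqP h].
  apply: subset_trans KU; apply/subsetP=> y; rewrite !inE h //.
- move=> C /imsetP[x]; rewrite !inE => /andP[xU KU] ->.
  have Pe : piece x =i seg x.
    move=> y; rewrite pieceE in_seg H4.
    case: (boolP (lo y == lo x)) => h; rewrite ?andbF ?andbT //.
    by move: (subsetP KU y); rewrite !inE h => /(_ isT) ->.
  have [_ _ h3 h4] := H3 x.
  exists (seg x); split => //; first by rewrite size_seg.
  - exact: useg.
  - by move=> y z; rewrite !Pe; exact: h4.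
- move=> C /imsetP[x]; rewrite !inE => /andP[xU KU] ->.
  have [h1 h2 h3 h4] := H3 x.
  
  set u := maxn a (lo x) - lo x; set v := minn b (hi x) - lo x.
  set p := take (v - u) (drop u (seg x)).
  have pE : forall y, (y \in p) = (y \in piece x).
    move=> y; rewrite /p seg_memF ?useg // in_seg.
    case: (boolP (lo x <= index y s < hi x)) => hy /=; last first.
      rewrite pieceE -H4; apply/esym; move: hy; lia.
    rewrite idx_seg ?in_seg // pieceE -H4; move: hy; rewrite /u /v; lia.
  have nuv : ~~ ((u == 0) && (v == size (seg x))).
    apply/negP=> /andP[/eqP u0 /eqP v0]; move: KU => /negP []; apply/subsetP=> y.
    rewrite !inE => /eqP ly; have := H4 x y; rewrite ly eqxx.
    move: u0 v0; rewrite /u /v size_seg; lia.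
  have pc := cyc_sub (useg x) (leq_trans h3 (eq_leq (esym (size_seg x)))) h4.
  exists p; split.
  + apply/negP=> /eqP p0; have : x \in p by rewrite pE pieceE eqxx andbT.
    by rewrite p0.
  + by rewrite /p take_uniq // drop_uniq // useg.
  + by move=> y; rewrite pE.
  + move=> y z yC zC; apply: pc; rewrite ?pE //.
    * rewrite /u /v; lia.
    * rewrite size_seg /v; lia.
- move=> C D; rewrite PcPp => /imsetP[x1 _ ->] /imsetP[x2 _ ->]; rewrite -/(piece x1) -/(piece x2) => neq y z.
  rewrite !pieceE => /and3P[_ _ /eqP ly] /and3P[_ _ /eqP lz]; apply/negP => eyz.
  have := H6 eyz; rewrite H4 => /eqP lzy.
  by move: neq; rewrite (piece_eq (x := x1) (y := x2)) ?eqxx //; rewrite -ly -lz lzy.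
- case: (set_0Vmem Pp) => [->|[C0 /imsetP[x0 _ _]]]; first by rewrite cards0.
  have sub : Pp \subset [set piece (nth x0 s a); piece (nth x0 s b.-1)].
    apply/subsetP=> C /imsetP[x]; rewrite !inE => /andP[xU /subsetPn[y yK yU]] ->.
    move: yK yU; rewrite !inE => /eqP ly yU.
    have [h1 h2 h3 h4] := H3 x.
    have := H4 x y; rewrite ly eqxx => hy.
    have ia : a < size s by lia.
    have ib : b.-1 < size s by lia.
    case: (ltnP (index y s) a) => ya.
      apply/orP; left; apply/eqP; apply: piece_eq; apply/eqP; rewrite eq_sym -H4 index_uniq //; lia.
    apply/orP; right; apply/eqP; apply: piece_eq; apply/eqP; rewrite eq_sym -H4 index_uniq //; lia.
  by apply: leq_trans (subset_leq_card sub) _; rewrite cards2; case: (_ != _).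
Qed.

Definition f x := next (seg x) x.

Lemma xseg x : x \in seg x.
Proof. by rewrite in_seg; have [] := H3 x. Qed.

Lemma f_seg x : f x \in seg x.
Proof. by rewrite /f mem_next xseg. Qed.

Lemma e_f x : e x (f x).
Proof. by have [_ _ _ h4] := H3 x; rewrite h4 ?xseg ?f_seg // eqxx. Qed.

Lemma lo_f x : lo (f x) = lo x.
Proof. by have := f_seg x; rewrite in_seg H4 => /eqP. Qed.

Lemma idx_f x : index (f x) s = lo x + (index x s - lo x).+1 %% (hi x - lo x).
Proof.
have := next_indexF (useg x) (xseg x); rewrite -/(f x) size_seg !idx_seg ?xseg ?f_seg //.
have := f_seg x; rewrite in_seg; lia.
Qed.

Lemma edgesP : #|U| - 2 <= n_edges_in e U.
Proof.
case: (set_0Vmem U) => [->|[x0 x0U]]; first by rewrite cards0.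
set D := [set x in U | f x \in U].
have DU : D \subset U by apply/subsetP=> x; rewrite inE => /andP[].
have inj : {in D &, injective (fun x => [set x; f x])}.
  move=> x y _ _ E; case: (eqVneq x y) => // nxy.
  have : x \in [set y; f y] by rewrite -E !inE eqxx.
  rewrite !inE (negbTE nxy) /= => /eqP xf.
  have : y \in [set x; f x] by rewrite E !inE eqxx.
  rewrite !inE eq_sym (negbTE nxy) /= => /eqP yf.
  have lxy : lo x = lo y by rewrite xf lo_f.
  have sxy : seg x = seg y by rewrite /seg lxy (H5 lxy).
  have [_ _ h3 _] := H3 y.
  have := next_neq_prev (useg y) (leq_trans h3 (eq_leq (Logic.eq_sym (size_seg y)))) (xseg y).
  rewrite -/(f y) -xf.
  have -> : prev (seg y) y = x by rewrite {2}yf /f sxy prev_next // useg.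
  by rewrite eqxx.
have sub : [set [set x; f x] | x in D] \subset [set [set x; y] | x in U, y in U & e x y].
  apply/subsetP=> C /imsetP[x]; rewrite inE => /andP[xU fU] ->.
  move: xU fU; rewrite !inE => xU fU.
  apply/imset2P; apply: (Imset2spec (x2 := f x)); rewrite ?inE ?fU /=; [exact: xU | exact: e_f | by []].
have cD : #|D| <= n_edges_in e U.
  by rewrite /n_edges_in -(card_in_imset inj); apply: subset_leq_card sub.
set z1 := nth x0 s b.-1; set z2 := nth x0 s (hi (nth x0 s a)).-1.
have sub2 : U :\: D \subset [set z1; z2].
  apply/subsetP=> x; rewrite in_setD in_set2 => /andP[nD xU]; move: (xU).
  rewrite inE => /andP[ax xb].
  have [h1 h2 h3 h4] := H3 x.
  have fx := idx_f x.
  have [lt|ge] := ltnP (index x s - lo x).+1 (hi x - lo x).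
    rewrite modn_small // in fx.
    have fnU : f x \notin U by apply: contra nD => fU; rewrite inE xU fU.
    move: fnU; rewrite inE fx => fnU.
    apply/orP; left; apply/eqP; rewrite /z1 -(nth_index x0 (alls x)); congr nth; lia.
  have eqm : (index x s - lo x).+1 = hi x - lo x by lia.
  rewrite eqm modnn addn0 in fx.
  have fnU : f x \notin U by apply: contra nD => fU; rewrite inE xU fU.
  move: fnU; rewrite inE fx => fnU.
  have ia : a < size s by lia.
  have iz : index (nth x0 s a) s = a by rewrite index_uniq.
  have lz : lo (nth x0 s a) = lo x by apply/eqP; rewrite -H4 iz; lia.
  have hz := H5 lz.
  apply/orP; right; apply/eqP; rewrite /z2 -(nth_index x0 (alls x)) hz; congr nth; lia.
have c2 : #|U :\: D| <= 2.
  by apply: leq_trans (subset_leq_card sub2) _; rewrite cards2; case: (_ != _).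
have := cardsID D U; rewrite (setIidPr DU); lia.
Qed.
End Blocks.


Theorem lemma3p7 (k n : nat) (T : finType) (e : rel T) :
  0 < k -> #|T| = n -> two_factor e ->
  exists U : 'I_(n %/ k).+1 -> {set T},
    [/\ (forall i j, i != j -> [disjoint U i & U j]),
        \bigcup_i U i = [set: T],
        (forall i : 'I_(n %/ k).+1, 0 < i -> #|U i| = k),
        (forall i, cycles_and_at_most_2_paths e (U i))
      & (forall i : 'I_(n %/ k).+1, 0 < i -> k - 2 <= n_edges_in e (U i))].
Proof.
move=> k0 nT [[esym eirr] deg].
have [s [lo [hi [[us Es] G3 G4 G5 G6]]]] :=
  decomp esym eirr deg (S := setT) (fun x y _ _ => in_setT y).
have alls : forall x, x \in s by move=> x; rewrite -Es in_setT.
have H3 := fun x => G3 x (in_setT x).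
have H4 := fun x y => G4 x y (in_setT x) (in_setT y).
have H5 := fun x y => G5 x y (in_setT x) (in_setT y).
have H6 := fun x y => G6 x y (in_setT x).
have sz : size s = n.
  rewrite -nT -(card_uniqP us); apply: eq_card => x; by rewrite alls.
set q := n %/ k.
have qk : q * k <= n by apply: leq_trunc_div.
pose a (i : nat) := if i == 0 then q * k else (i - 1) * k.
pose b (i : nat) := if i == 0 then n else i * k.
have bs : forall i : 'I_q.+1, b i <= size s.
  move=> i; rewrite sz /b; case: ifP => // _.
  apply: leq_trans qk; rewrite leq_mul2r -ltnS ltn_ord orbT //.
have ab : forall i : 'I_q.+1, 0 < i -> b i - a i = k.
  move=> i i0; rewrite /a /b; case: ifP => [/eqP i00|_]; first by rewrite i00 in i0.
  have -> : (i : nat) = (i - 1).+1 by lia.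
  rewrite mulSn; lia.
exists (fun i => U s (a i) (b i)); split.
- move=> i j nij; rewrite -setI_eq0; apply/eqP/setP => x; rewrite !inE.
  have ilt := ltn_ord i; have jlt := ltn_ord j.
  have mono : forall u v : nat, u <= v -> u * k <= v * k by move=> u v uv; rewrite leq_mul2r uv orbT.
  have nij' : (i : nat) != j by [].
  rewrite /a /b.
  case: (ltngtP i j) => [lij|lij|eij]; last by move: nij'; rewrite eij eqxx.
  + have m1 := mono i (j - 1) ltac:(lia).
    have m2 := mono j q ltac:(lia).
    case: ifP; case: ifP; lia.
  + have m1 := mono j (i - 1) ltac:(lia).
    have m2 := mono i q ltac:(lia).
    case: ifP; case: ifP; lia.
- apply/setP => x; rewrite in_setT; apply/bigcupP.
  have tn : index x s < n by rewrite -sz index_mem alls.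
  case: (ltnP (index x s) (q * k)) => tq.
    have hlt : (index x s %/ k).+1 < q.+1 by rewrite ltnS ltn_divLR.
    exists (Ordinal hlt) => //; rewrite /U inE /a /b /=.
    have h1 := leq_trunc_div (index x s) k.
    have h2 : index x s < (index x s %/ k).+1 * k by rewrite -ltn_divLR.
    rewrite subn1 /=; lia.
  by exists ord0 => //; rewrite /U inE /a /b /=; lia.
- move=> i i0; rewrite card_U //; exact: ab.
- move=> i; exact: (blockP us alls H3 H4 H6 (a i) (bs i)).
- move=> i i0; have := edgesP us alls H3 H4 H5 (a i) (bs i); rewrite card_U // ab //.
Qed.
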